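(* The genus zero potential $\mathcal F_0^{un}$ of the untwisted theory of $(x^4+y^4+z^2,G_{max})$ is obtained from $\mathrm{res}_\hbar\ln\mathcal T^{(|G_{max}|)}$ by a linear change of variables, where $\mathrm{res}_\hbar$ denotes the coefficient of $\hbar^{-1}$.
   Context: $W=x^4+y^4+z^2$ with weights $q_1=q_2=\tfrac14$, $q_3=\tfrac12$; $G=G_{max}=\{(\Theta_1,\Theta_2,\Theta_3)\in(\mathbb Q/\mathbb Z)^3: 4\Theta_1=4\Theta_2=2\Theta_3=0\}$, of order $32$; each $h\in G$ is written uniquely as $(\Theta_1^h,\Theta_2^h,\Theta_3^h)$ with $0\le\Theta_k^h<1$. The untwisted theory has state space with basis $\{\phi_h\}_{h\in G}$, pairing $\langle\phi_{h_1},\phi_{h_2}\rangle=1$ if $h_1=h_2^{-1}$ and $0$ otherwise, and genus zero correlators $\langle\tau_{a_1}(\phi_{h_1})\cdots\tau_{a_n}(\phi_{h_n})\rangle^{un}_{0,n}=\binom{\sum_ia_i}{a_1,\dots,a_n}$ when $\sum_ia_i=n-3$ and $q_k(n-2)-\sum_{i=1}^n\Theta_k^{h_i}\in\mathbb Z$ for $k=1,2,3$, and $0$ otherwise; $\mathcal F_0^{un}=\sum\frac{1}{|\mathrm{Aut}|}\langle\tau_{a_1}(\phi_{h_1})\cdots\tau_{a_n}(\phi_{h_n})\rangle^{un}_{0,n}\prod_i t^{a_i,h_i}$. $\mathcal Z^{pt}(\{u^\ell\}_{\ell\ge0})=\exp(\sum_g\hbar^{g-1}\mathcal F_g^{pt})$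 is the Gromov--Witten partition function of a point, $\mathcal F_g^{pt}=\sum_n\frac1{n!}\sum_{a_1,\dots,a_n}\int_{\overline{\mathcal M}_{g,n}}\psi_1^{a_1}\cdots\psi_n^{a_n}\,u^{a_1}\cdots u^{a_n}$, and $\mathcal T^{(m+1)}:=\prod_{k=0}^m\mathcal Z^{pt}(\{u^{\ell,k}\}_{\ell\ge0})$ in independent sets of variables. *)

(* Defs.v *)
From mathcomp Require Import all_boot all_order all_algebra all_field.
Set Implicit Arguments. Unset Strict Implicit. Unset Printing Implicit Defensive.
Import Order.TTheory GRing.Theory Num.Theory.
Local Open Scope ring_scope.

(* h = (i, j, l) encodes (Theta_1, Theta_2, Theta_3) = (i/4, j/4, l/2)
   with 0 <= Theta_k < 1; these are exactly the 32 elements of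
   {Theta in (Q/Z)^3 : 4 Theta_1 = 4 Theta_2 = 2 Theta_3 = 0}. *)
Definition Gmax : finType := ('I_4 * 'I_4 * 'I_2)%type.

Definition Theta (h : Gmax) (k : 'I_3) : rat :=
  if val k == 0%N then (h.1.1 : nat)%:R / 4
  else if val k == 1%N then (h.1.2 : nat)%:R / 4
  else (h.2 : nat)%:R / 2.

(* Weights of W = x^4 + y^4 + z^2. *)
Definition qw (k : 'I_3) : rat := if val k == 2%N then 1 / 2 else 1 / 4.

Definition multinom (s : seq nat) : nat :=
  ((sumn s)`! %/ \prod_(a <- s) a`!)%N.

(* ---------- Formal power series via Taylor coefficients ----------
   A formal power series F in variables x_v (v : V) is represented by its
   symmetric Taylor-coefficient tensor  c : seq V -> algC,
   c [:: v_1; ...; v_n] = d^n F / dx_{v_1} ... dx_{v_n} (0), i.e.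
   F = sum_n 1/n! sum_{v_1..v_n} c(v_1..v_n) x_{v_1} ... x_{v_n}. *)
Definition fps (V : Type) := seq V -> algC.

Definition corr_un (s : seq (nat * Gmax)) : algC :=
  let n := size s in
  if ((sumn (map fst s) + 3)%N == n) &&
     [forall k : 'I_3,
        (qw k * (n%:R - 2) - \sum_(x <- s) Theta x.2 k) \is a Num.int]
  then (multinom (map fst s))%:R else 0.

Definition F0un : fps (nat * Gmax) := corr_un.

(* Genus-zero descendant integrals of a point:
   int_{Mbar_{0,n}} psi_1^{a_1} ... psi_n^{a_n}
     = binom(n-3; a_1..a_n) if sum a_i = n - 3, and 0 otherwise. *)
Definition corr_pt0 (s : seq nat) : algC :=
  if (sumn s + 3)%N == size s then (multinom s)%:R else 0.

(* res_hbar ln T^{(m+1)} = sum_{k=0}^{m} F_0^{pt}({u^{l,k}}_l), in the variables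
   u^{l,k}, l : nat, k : 'I_(m+1). Taylor coefficients: *)
Definition resLnT (m : nat) : fps (nat * 'I_m.+1) := fun s =>
  \sum_(k < m.+1) (if all (fun x => x.2 == k) s then corr_pt0 (map fst s) else 0).

(* ---------- Linear changes of variables ----------
   u_w = sum_v M w v * x_v   (w : W, v : V),
   where for each v only the w in the finite list (col v) have M w v <> 0. *)
Definition col_finite (V W : eqType) (M : W -> V -> algC) (col : V -> seq W) :=
  forall v w, M w v != 0 -> w \in col v.

(* Taylor coefficients of x |-> G(M x):
   d^n/dx_{v_1}..dx_{v_n} G(Mx)(0) = sum_{w_1..w_n} prod_i M w_i v_i * c_G(w_1..w_n). *)
Fixpoint subst_aux (V W : eqType) (M : W -> V -> algC) (col : V -> seq W)
    (G : fps W) (acc : seq W) (s : seq V) : algC :=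
  match s with
  | [::] => G (rev acc)
  | v :: s' => \sum_(w <- undup (col v)) M w v * subst_aux M col G (w :: acc) s'
  end.

Definition subst (V W : eqType) (M : W -> V -> algC) (col : V -> seq W)
    (G : fps W) : fps V := fun s => subst_aux M col G [::] s.

Definition lin_inverse (V W : eqType) (M : W -> V -> algC) (colM : V -> seq W)
    (N : V -> W -> algC) (colN : W -> seq V) :=
  col_finite N colN /\
  (forall w w', \sum_(v <- undup (colN w')) M w v * N v w' = (w == w')%:R) /\
  (forall v v', \sum_(w <- undup (colM v')) N v w * M w v' = (v == v')%:R).
Arguments resLnT : clear implicits.

(* Main.v *)
Set Warnings "-all".
Require Import Defs.
From mathcomp Require Import all_boot all_order all_algebra all_field.
From mathcomp Require Import ring.
Import Order.TTheory GRing.Theory Num.Theory.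
Local Open Scope ring_scope.

Lemma i4 : ('i : algC) ^+ 4 = 1.
Proof. by rewrite (_ : 4%N = (2 * 2)%N) // exprM sqrCi sqrrN expr1n. Qed.

Lemma iexp_mod (m : nat) : ('i : algC) ^+ m = 'i ^+ (m %% 4).
Proof. by rewrite {1}(divn_eq m 4) exprD mulnC exprM i4 expr1n mul1r. Qed.

Lemma iexp_add4 (x y : nat) : ('i : algC) ^+ (x + 4 * y) = 'i ^+ x.
Proof. by rewrite exprD exprM i4 expr1n mulr1. Qed.

Lemma ie (n : nat) : ('i : algC) ^+ n =
  if (n %% 4 == 0)%N then 1 else if (n %% 4 == 1)%N then 'i
  else if (n %% 4 == 2)%N then -1 else - 'i.
Proof.
rewrite iexp_mod. have : (n %% 4 < 4)%N by rewrite ltn_mod.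
case: (n %% 4)%N => [|[|[|[|//]]]] _ /=.
- by rewrite expr0.
- by rewrite expr1.
- by rewrite sqrCi.
- by rewrite exprS sqrCi mulrN1.
Qed.

Lemma sum4 (X : nat) : \sum_(p < 4) ('i : algC) ^+ (p * X) = (4 %| X)%:R * 4.
Proof.
rewrite !big_ord_recl big_ord0 /=.
have H : forall p : nat, ('i : algC) ^+ (p * X) = ('i ^+ (X %% 4)) ^+ p.
  by move=> p; rewrite -exprM iexp_mod [RHS]iexp_mod mulnC modnMml.
rewrite !H /bump /= /dvdn.
have : (X %% 4 < 4)%N by rewrite ltn_mod.
case: (X %% 4)%N => [|[|[|[|//]]]] _; rewrite -!exprM !ie /=.
all: ring.
Qed.


Lemma sum2 (Z : nat) : \sum_(r < 2) ('i : algC) ^+ (2 * (r * Z)) = (2 %| Z)%:R * 2.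
Proof.
rewrite !big_ord_recl big_ord0 /= /bump /=.
rewrite addn0 mul1n (exprM _ 2 Z) sqrCi -signr_odd dvdn2.
case: (odd Z) => /=; rewrite ?expr1 ?expr0 ?mul0r ?mul1r; ring.
Qed.

Lemma card_G : #|Gmax| = 32%N.
Proof. by rewrite !card_prod !card_ord. Qed.

Definition dec (k : 'I_32) : Gmax := enum_val (cast_ord (esym card_G) k).
Definition enc (g : Gmax) : 'I_32 := cast_ord card_G (enum_rank g).

Lemma decK : cancel dec enc.
Proof. by move=> k; rewrite /dec /enc enum_valK cast_ordKV. Qed.
Lemma encK : cancel enc dec.
Proof. by move=> g; rewrite /dec /enc cast_ordK enum_rankK. Qed.

Lemma sum_dec (F : Gmax -> algC) : \sum_(k < 32) F (dec k) = \sum_g F g.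
Proof.
rewrite (reindex dec) //. exists enc => x _; [exact: decK | exact: encK].
Qed.

Lemma key_sum (x1 y1 z1 : nat) :
  \sum_(g : Gmax) ('i : algC) ^+ (g.1.1 * x1 + g.1.2 * y1 + 2 * (g.2 * z1)) =
  ((4 %| x1) && (4 %| y1) && (2 %| z1))%N%:R * 32.
Proof.
set F := fun g : Gmax => ('i : algC) ^+ (g.1.1 * x1 + g.1.2 * y1 + 2 * (g.2 * z1)).
rewrite -/(\sum_g F g).
have -> : \sum_g F g = \sum_(p < 4) \sum_(q < 4) \sum_(r < 2) F ((p, q), r).
  rewrite (eq_bigr (fun g => F (g.1.1, g.1.2, g.2))); last by case=> [[]].
  rewrite -(pair_bigA _ (fun pq r => F (pq.1, pq.2, r))) /=.
  by rewrite -(pair_bigA _ (fun p q => \sum_r F (p, q, r))) /=.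
rewrite /F /=.
under eq_bigr do under eq_bigr do under eq_bigr do rewrite exprD [X in X * _]exprD.
under eq_bigr do under eq_bigr do rewrite -mulr_sumr.
under eq_bigr do under eq_bigr do rewrite -mulrA.
under eq_bigr do rewrite -mulr_sumr.
rewrite -mulr_suml -mulr_suml.
rewrite sum4 sum4 sum2.
case: (4 %| x1)%N; case: (4 %| y1)%N; case: (2 %| z1)%N; rewrite /=; ring.
Qed.

Definition c : algC := 3.-root 32.
Definition ci : algC := c^-1.

Lemma c3 : c ^+ 3 = 32.
Proof. by rewrite /c rootCK. Qed.
Lemma c_neq0 : c != 0.
Proof. by rewrite /c rootC_eq0 // pnatr_eq0. Qed.
Lemma cci : c * ci = 1.
Proof. by rewrite /ci mulfV // c_neq0. Qed.
Lemma ci3 : ci ^+ 3 = 32^-1.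
Proof. by rewrite /ci exprVn c3. Qed.

Definition sk (k : 'I_32) : nat := let g := dec k in (g.1.1 + g.1.2 + 2 * g.2)%N.
Definition chiE (k : 'I_32) (h : Gmax) : nat :=
  let g := dec k in (g.1.1 * h.1.1 + g.1.2 * h.1.2 + 2 * (g.2 * h.2))%N.
Definition u (k : 'I_32) (a : nat) : algC := c ^+ a * ci * 'i ^+ (sk k + 6 * sk k * a).
Definition f (k : 'I_32) (x : nat * Gmax) : algC := u k x.1 * 'i ^+ chiE k x.2.
Definition g (k : 'I_32) (x : nat * Gmax) : algC := (u k x.1)^-1 / 32 * 'i ^+ (3 * chiE k x.2).

Definition MM (w : nat * 'I_32) (v : nat * Gmax) : algC := (w.1 == v.1)%:R * f w.2 v.
Definition colM (v : nat * Gmax) : seq (nat * 'I_32) := [seq (v.1, k) | k <- enum 'I_32].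
Definition NN (v : nat * Gmax) (w : nat * 'I_32) : algC := (v.1 == w.1)%:R * g w.2 v.
Definition colN (w : nat * 'I_32) : seq (nat * Gmax) := [seq (w.1, h) | h <- enum Gmax].


Lemma rA (x y z : algC) (m n : nat) :
  x * z ^+ m * (y^-1 / 32 * z ^+ (3 * n)) = (x * y^-1 / 32) * z ^+ (m + 3 * n).
Proof. rewrite exprD; ring. Qed.
Lemma rB (x y z : algC) (m n : nat) :
  y^-1 / 32 * z ^+ (3 * m) * (x * z ^+ n) = (y^-1 * x / 32) * z ^+ (3 * m + n).
Proof. rewrite exprD; ring. Qed.
Lemma rC (c ci z : algC) (a A n e1 m e2 : nat) :
  (c ^+ a * ci * z ^+ e1 * z ^+ m) * (c ^+ A * ci ^+ n * z ^+ e2) =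
  c ^+ (a + A) * ci ^+ n.+1 * z ^+ (e1 + m + e2).
Proof. rewrite !exprD exprS; ring. Qed.
Lemma nA (p q r p' q' r' a b c : nat) :
  ((p * a + q * b + 2 * (r * c)) + 3 * (p' * a + q' * b + 2 * (r' * c)) =
   a * (p+3 * p') + b * (q+3 * q') + 2 * (c * (r+3 * r')))%N.
Proof. ring. Qed.
Lemma nB (p q r a b c a' b' c' : nat) :
  (3 * (p * a + q * b + 2 * (r * c)) + (p * a' + q * b' + 2 * (r * c')) =
   p * (a'+3 * a) + q * (b'+3 * b) + 2 * (r * (c'+3 * c)))%N.
Proof. ring. Qed.
Lemma nC (p q r a b c A B C : nat) :
  ((p * a + q * b + 2 * (r * c)) + (p * A + q * B + 2 * (r * C)) =
   p * (a+A) + q * (b+B) + 2 * (r * (c+C)))%N.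
Proof. ring. Qed.
Lemma nD (n S a A m M : nat) :
  (n.+1 * S + 6 * S * (a+A) + (m + M) = (S + 6 * S * a + m) + (n * S + 6 * S * A + M))%N.
Proof. ring. Qed.
Lemma nE (p q r A H1 H2 H3 : nat) :
  ((A+3) * (p+q+2 * r) + 6 * (p+q+2 * r) * A + (p * H1+q * H2+2 * (r * H3)) =
   (p * (H1+3 * A.+1)+q * (H2+3 * A.+1)+2 * (r * (H3+3 * A.+1))) + 4 * ((p+q+2 * r) * A))%N.
Proof. ring. Qed.
Lemma rE (c ci z : algC) (A e : nat) : c * ci = 1 ->
  c ^+ A * ci ^+ (A + 3) * z ^+ e = ci ^+ 3 * z ^+ e.
Proof. by move=> h; rewrite exprD mulrA -exprMn h expr1n mul1r. Qed.
Lemma chiEE k h : chiE k h = ((dec k).1.1 * h.1.1 + (dec k).1.2 * h.1.2 + 2 * ((dec k).2 * h.2))%N.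
Proof. by []. Qed.
Lemma skE k : sk k = ((dec k).1.1 + (dec k).1.2 + 2 * (dec k).2)%N.
Proof. by []. Qed.
Lemma i_neq0 : ('i : algC) != 0.
Proof. apply/negP => /eqP h; have := @sqrCi algC; rewrite h expr0n /= => /eqP; by rewrite eq_sym oppr_eq0 oner_eq0. Qed.

Lemma u_neq0 k a : u k a != 0.
Proof.
rewrite /u !mulf_neq0 ?expf_neq0 ?c_neq0 ?i_neq0 //.
by rewrite /ci invr_eq0 c_neq0.
Qed.

Lemma undup_colM v : undup (colM v) = colM v.
Proof. by rewrite undup_id // map_inj_uniq ?enum_uniq // => x y [->]. Qed.
Lemma undup_colN w : undup (colN w) = colN w.
Proof. by rewrite undup_id // map_inj_uniq ?enum_uniq // => x y [->]. Qed.

Lemma colM_fin : col_finite MM colM.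
Proof.
move=> [a h] [l k]; rewrite /MM /=; have [->|ne] := eqVneq l a; last by rewrite mul0r eqxx.
by move=> _; apply/mapP; exists k; rewrite ?mem_enum.
Qed.
Lemma colN_fin : col_finite NN colN.
Proof.
move=> [l k] [a h]; rewrite /NN /=; have [->|ne] := eqVneq a l; last by rewrite mul0r eqxx.
by move=> _; apply/mapP; exists h; rewrite ?mem_enum.
Qed.

Arguments u : simpl never.
Arguments f : simpl never.
Arguments g : simpl never.
Lemma cond4 (p p' : 'I_4) : (4 %| p + 3 * p')%N = (p == p').
Proof. by case: p => [[|[|[|[|//]]]] ?]; case: p' => [[|[|[|[|//]]]] ?]. Qed.
Lemma cond2 (p p' : 'I_2) : (2 %| p + 3 * p')%N = (p == p').
Proof. by case: p => [[|[|//]] ?]; case: p' => [[|[|//]] ?]. Qed.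

Lemma deceq (k k' : 'I_32) : (k == k') = (dec k == dec k').
Proof. by rewrite (inj_eq (can_inj decK)). Qed.

Lemma orth1 (k k' : 'I_32) (a : nat) :
  \sum_(h : Gmax) f k (a, h) * g k' (a, h) = (k == k')%:R.
Proof.
rewrite /f /g.
under eq_bigr => h _.
  rewrite /= rA !chiEE nA.
  over.
rewrite -mulr_sumr key_sum.
set b := (_ && _)%N.
have -> : b = (k == k').
  rewrite /b deceq; clear b; case: (dec k) => [[p q] r]; case: (dec k') => [[p' q'] r'] /=.
  by rewrite !cond4 cond2 !xpair_eqE.
case: eqVneq => [->|_]; last by rewrite mul0r mulr0.
by rewrite mul1r mulfV ?u_neq0 // mul1r mulVf // pnatr_eq0.
Qed.

Lemma orth2 (h h' : Gmax) (a : nat) :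
  \sum_(k < 32) g k (a, h) * f k (a, h') = (h == h')%:R.
Proof.
rewrite /f /g.
under eq_bigr => k _.
  rewrite /= rB mulVf ?u_neq0 // mul1r !chiEE nB.
  over.
rewrite (sum_dec (fun d => 32^-1 * 'i ^+ (d.1.1 * (h'.1.1 + 3 * h.1.1) + d.1.2 * (h'.1.2 + 3 * h.1.2)
     + 2 * (d.2 * (h'.2 + 3 * h.2))))).
rewrite -mulr_sumr key_sum.
set b := (_ && _)%N.
have -> : b = (h == h').
  rewrite /b eq_sym; clear b; case: h => [[p q] r]; case: h' => [[p' q'] r'] /=.
  by rewrite !cond4 cond2 !xpair_eqE.
clear b; case: (h == h'); last by rewrite mul0r mulr0.
by rewrite mul1r mulVf // pnatr_eq0.
Qed.

Lemma linv : lin_inverse MM colM NN colN.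
Proof.
split; first exact: colN_fin.
split.
- move=> [l k] [l' k']; rewrite undup_colN big_map big_enum /=.
  rewrite /MM /NN /= eqxx.
  under eq_bigr do rewrite mul1r -mulrA.
  rewrite -mulr_sumr orth1 xpair_eqE.
  by case: (l == l'); rewrite ?mul0r ?mul1r.
- move=> [a h] [a' h']; rewrite undup_colM big_map big_enum /=.
  rewrite /MM /NN /= eqxx.
  under eq_bigr do rewrite mul1r mulrAC -mulrA.
  rewrite -mulr_sumr xpair_eqE.
  case: eqP => [->|]; last by rewrite mul0r.
  under eq_bigr do rewrite mulrC.
  by rewrite orth2 mul1r.
Qed.

Lemma subst_auxE (s : seq (nat * Gmax)) (acc : seq (nat * 'I_32)) :
  subst_aux MM colM (resLnT 31) acc s =
  \sum_(k < 32) ((all (fun x => x.2 == k) acc)%:R * (\prod_(x <- s) f k x)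
                  * corr_pt0 (map fst (rev acc) ++ map fst s)).
Proof.
elim: s acc => [|v s IH] acc /=.
  rewrite /resLnT; apply: eq_bigr => k _.
  by rewrite all_rev big_nil cats0 mulr1; case: all; rewrite ?mul1r ?mul0r.
rewrite undup_colM big_map big_enum /=.
under eq_bigr do rewrite IH mulr_sumr.
rewrite exchange_big /=; apply: eq_bigr => k _.
rewrite [X in X = _](bigD1 k) //= [X in _ + X = _]big1 ?addr0; last first.
  by move=> k' ne; rewrite (negbTE ne) /= !mul0r mulr0.
rewrite eqxx /= rev_cons map_rcons cat_rcons big_cons /MM /= eqxx mul1r.
by case: all; rewrite ?mul0r ?mulr0 ?mul1r ?mulrA.
Qed.

Lemma substE (s : seq (nat * Gmax)) :
  subst MM colM (resLnT 31) s =
  (\sum_(k < 32) \prod_(x <- s) f k x) * corr_pt0 (map fst s).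
Proof.
rewrite /subst subst_auxE mulr_suml; apply: eq_bigr => k _.
by rewrite /= mul1r.
Qed.

Definition H1 (s : seq (nat * Gmax)) : nat := \sum_(x <- s) (x.2.1.1 : nat).
Definition H2 (s : seq (nat * Gmax)) : nat := \sum_(x <- s) (x.2.1.2 : nat).
Definition H3 (s : seq (nat * Gmax)) : nat := \sum_(x <- s) (x.2.2 : nat).

Lemma sum_chi k s : (\sum_(x <- s) chiE k x.2 =
  (dec k).1.1 * H1 s + (dec k).1.2 * H2 s + 2 * ((dec k).2 * H3 s))%N.
Proof.
rewrite /H1 /H2 /H3; elim: s => [|x s IH]; first by rewrite !big_nil !muln0.
by rewrite !big_cons IH chiEE nC.
Qed.

Lemma prod_f_gen k s : \prod_(x <- s) f k x =
  c ^+ (sumn (map fst s)) * ci ^+ (size s) *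
  'i ^+ (size s * sk k + 6 * sk k * sumn (map fst s) + \sum_(x <- s) chiE k x.2).
Proof.
elim: s => [|[a h] s IH]; first by rewrite !big_nil /= mul0n muln0 !expr0 !mulr1.
rewrite big_cons IH big_cons /=.
by rewrite nD /f /u rC.
Qed.

Lemma sumf s : (sumn (map fst s) + 3 = size s)%N ->
  \sum_(k < 32) \prod_(x <- s) f k x =
  ((4 %| H1 s + 3 * (sumn (map fst s)).+1) && (4 %| H2 s + 3 * (sumn (map fst s)).+1)
    && (2 %| H3 s + 3 * (sumn (map fst s)).+1))%N%:R.
Proof.
move=> hA.
set A := sumn (map fst s).
under eq_bigr => k _.
  rewrite prod_f_gen -hA sum_chi -/A.
  rewrite skE nE.
  rewrite iexp_add4 (rE _ _ _ _ _ cci) ci3.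
  over.
rewrite (sum_dec (fun d => 32^-1 * 'i ^+ (d.1.1 * (H1 s + 3 * A.+1) + d.1.2 * (H2 s + 3 * A.+1)
       + 2 * (d.2 * (H3 s + 3 * A.+1))))).
by rewrite -mulr_sumr key_sum mulrC -mulrA mulfV ?mulr1 // pnatr_eq0.
Qed.

Lemma int01 (x : rat) : x \is a Num.int -> 0 < x -> x < 1 -> False.
Proof.
case/intrP=> z ->; rewrite ltr0z ltrz1 => h1 h2.
have : (0 < z < 1)%R by rewrite h1 h2.
by case: z {h1 h2} => [[|n]|n].
Qed.

Lemma int_div (m d : nat) : (0 < d)%N ->
  ((m%:R / d%:R : rat) \is a Num.int) = (d %| m)%N.
Proof.
move=> d0.
have dne : (d%:R : rat) != 0 by rewrite pnatr_eq0 -lt0n.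
rewrite {1}(divn_eq m d) natrD natrM mulrDl mulfK // rpredDl ?natr_int //.
rewrite /dvdn; case: eqP => [->|ne]; first by rewrite mul0r rpred0.
apply/negP => hi.
have h1 : (0 : rat) < (m %% d)%:R / d%:R.
  by rewrite divr_gt0 // ltr0n // lt0n; apply/eqP.
have h2 : ((m %% d)%:R / d%:R : rat) < 1.
  by rewrite ltr_pdivrMr ?ltr0n // mul1r ltr_nat ltn_mod.
have X := int01. have Y := X _ hi. have Z := Y h1. exact: Z h2.
Qed.

Lemma condk (s : seq (nat * Gmax)) (k : 'I_3) :
  (sumn (map fst s) + 3 = size s)%N ->
  ((qw k * ((size s)%:R - 2) - \sum_(x <- s) Theta x.2 k) \is a Num.int) =
  (if val k == 0%N then (4 %| H1 s + 3 * (sumn (map fst s)).+1)%N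
   else if val k == 1%N then (4 %| H2 s + 3 * (sumn (map fst s)).+1)%N
   else (2 %| H3 s + 3 * (sumn (map fst s)).+1)%N).
Proof.
move=> hA; rewrite -hA; set A := sumn (map fst s).
rewrite /qw /Theta /H1 /H2 /H3.
case: k => [[|[|[|//]]] /= _].
- rewrite -mulr_suml -natr_sum.
  set H := (\sum_(i <- s) _)%N.
  have -> : (1 / 4 * ((A + 3)%:R - 2) - H%:R / 4 : rat) =
     (A.+1)%:R - (H + 3 * A.+1)%:R / 4%:R.
    by rewrite !natrD !natrM; field.
  by rewrite rpredBl ?natr_int // int_div.
- rewrite -mulr_suml -natr_sum.
  set H := (\sum_(i <- s) _)%N.
  have -> : (1 / 4 * ((A + 3)%:R - 2) - H%:R / 4 : rat) =
     (A.+1)%:R - (H + 3 * A.+1)%:R / 4%:R.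
    by rewrite !natrD !natrM; field.
  by rewrite rpredBl ?natr_int // int_div.
- rewrite -mulr_suml -natr_sum.
  set H := (\sum_(i <- s) _)%N.
  have -> : (1 / 2 * ((A + 3)%:R - 2) - H%:R / 2 : rat) =
     (2 * A.+1)%:R - (H + 3 * A.+1)%:R / 2%:R.
    by rewrite !natrD !natrM; field.
  by rewrite rpredBl ?natr_int // int_div.
Qed.

Lemma cond_all (s : seq (nat * Gmax)) :
  (sumn (map fst s) + 3 = size s)%N ->
  [forall k : 'I_3, (qw k * ((size s)%:R - 2) - \sum_(x <- s) Theta x.2 k) \is a Num.int] =
  ((4 %| H1 s + 3 * (sumn (map fst s)).+1) && (4 %| H2 s + 3 * (sumn (map fst s)).+1)
    && (2 %| H3 s + 3 * (sumn (map fst s)).+1))%N.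
Proof.
move=> hA.
apply/forallP/idP => [h | ].
  have h0 := h (@Ordinal 3 0 isT); have h1 := h (@Ordinal 3 1 isT).
  have h2 := h (@Ordinal 3 2 isT).
  rewrite condk //= in h0; rewrite condk //= in h1; rewrite condk //= in h2.
  by rewrite h0 h1 h2.
case/andP => /andP [h0 h1] h2 k; rewrite condk //.
by case: k => [[|[|[|//]]] /= _].
Qed.

Theorem mainTheorem7 :
  exists (M : nat * 'I_32 -> nat * Gmax -> algC)
         (colM : nat * Gmax -> seq (nat * 'I_32))
         (N : nat * Gmax -> nat * 'I_32 -> algC)
         (colN : nat * 'I_32 -> seq (nat * Gmax)),
    col_finite M colM /\ lin_inverse M colM N colN /\
    forall s : seq (nat * Gmax), F0un s = subst M colM (resLnT 31) s.
Proof.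
exists MM, colM, NN, colN; split; first exact: colM_fin.
split; first exact: linv.
move=> s; rewrite substE /F0un /corr_un /corr_pt0 size_map.
case: eqP => hA /=; last by rewrite mulr0.
rewrite sumf // cond_all //.
by case: (_ && _); rewrite ?mul1r ?mul0r.
Qed.
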